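(* If $X$ is weakly Alster and $Y$ is weakly Lindel\''of, then $X\times Y$ is weakly Lindel\''of.
   Context: All spaces are infinite ${\sf T}_1$ topological spaces. $\mathcal{G}_K$ is the family of all collections $\mathcal{U}$ of ${\sf G}_\delta$ subsets of $X$ with $X\notin\mathcal{U}$ such that each compact subset of $X$ is contained in some member of $\mathcal{U}$. $X$ is weakly Alster if every member of $\mathcal{G}_K$ has a countable subcollection whose union is dense in $X$. A space is weakly Lindel\''of if every open cover has a countable subfamily whose union is dense. *)

(* Defs.v *)
From Stdlib Require Import List.
Import ListNotations.

Definition set (T : Type) := T -> Prop.

Definition is_topology {T : Type} (open : set T -> Prop) : Prop :=
  open (fun _ => True) /\
  (forall F : set T -> Prop, (forall U, F U -> open U) ->
     open (fun x => exists U, F U /\ U x)) /\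
  (forall U V, open U -> open V -> open (fun x => U x /\ V x)).

Definition T1_space {T : Type} (open : set T -> Prop) : Prop :=
  forall x y : T, x <> y -> exists U, open U /\ U x /\ ~ U y.

Definition infinite_type (T : Type) : Prop :=
  ~ exists l : list T, forall x : T, In x l.

Definition dense {T : Type} (open : set T -> Prop) (D : set T) : Prop :=
  forall U, open U -> (exists x, U x) -> exists x, U x /\ D x.

Definition G_delta {T : Type} (open : set T -> Prop) (A : set T) : Prop :=
  exists f : nat -> set T, (forall n, open (f n)) /\
    (forall x, A x <-> forall n, f n x).

Definition compact_subset {T : Type} (open : set T -> Prop) (K : set T) : Prop :=
  forall C : set T -> Prop, (forall U, C U -> open U) ->
    (forall x, K x -> exists U, C U /\ U x) ->
    exists l : list (set T), (forall U, In U l -> C U) /\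
      (forall x, K x -> exists U, In U l /\ U x).

Definition in_G_K {T : Type} (open : set T -> Prop) (UU : set T -> Prop) : Prop :=
  (forall U, UU U -> G_delta open U) /\
  (forall U, UU U -> ~ (forall x, U x)) /\
  (forall K, compact_subset open K ->
     exists U, UU U /\ forall x, K x -> U x).

(* countable subcollection with dense union; a countable nonempty subfamily is
   the range of a sequence *)
Definition has_countable_dense_subfamily {T : Type} (open : set T -> Prop)
  (UU : set T -> Prop) : Prop :=
  exists f : nat -> set T, (forall n, UU (f n)) /\
    dense open (fun x => exists n, f n x).

Definition weakly_Alster {T : Type} (open : set T -> Prop) : Prop :=
  forall UU, in_G_K open UU -> has_countable_dense_subfamily open UU.

Definition weakly_Lindelof {T : Type} (open : set T -> Prop) : Prop :=
  forall UU : set T -> Prop, (forall U, UU U -> open U) ->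
    (forall x, exists U, UU U /\ U x) ->
    has_countable_dense_subfamily open UU.

Definition prod_open {X Y : Type} (oX : set X -> Prop) (oY : set Y -> Prop)
  (W : set (X * Y)) : Prop :=
  forall p, W p -> exists U V, oX U /\ oY V /\ U (fst p) /\ V (snd p) /\
    (forall x y, U x -> V y -> W (x, y)).

(* Main.v *)
Require Import Defs.
From Stdlib Require Import List Cantor Classical ClassicalEpsilon.
Import ListNotations.

Lemma finite_rect (X Y : Type) (oY : set Y -> Prop) (tY : is_topology oY)
  (UU : set (X * Y) -> Prop) (y : Y) (lc : list (set X)) :
  (forall U, In U lc -> exists V W, oY V /\ V y /\ UU W /\
       forall a b, U a -> V b -> W (a, b)) ->
  exists V l, oY V /\ V y /\ (forall W, In W l -> UU W) /\
    (forall U, In U lc -> forall a b, U a -> V b -> exists W, In W l /\ W (a, b)).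
Proof.
  destruct tY as [tT [tU tI]].
  induction lc as [|U0 lc IH]; intros H.
  - exists (fun _ => True), []. repeat split; auto.
    + intros W []. 
    + intros U [].
  - destruct IH as [V [l [HV [Vy [Hl Hc]]]]].
    { intros U HU; apply H; right; exact HU. }
    destruct (H U0 (or_introl eq_refl)) as [V0 [W0 [HV0 [V0y [HW0 Hr]]]]].
    exists (fun b => V b /\ V0 b), (W0 :: l).
    repeat split; auto.
    + intros W [<-|HW]; auto.
    + intros U [<-|HU] a b Ha [Hb Hb0].
      * exists W0; split; [left; reflexivity| auto].
      * destruct (Hc U HU a b Ha Hb) as [W [HWl HW]].
        exists W; split; [right|]; auto.
Qed.

Lemma keyA (X Y : Type) (oX : set X -> Prop) (oY : set Y -> Prop)
  (tX : is_topology oX) (tY : is_topology oY) (UU : set (X * Y) -> Prop)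
  (HUo : forall U, UU U -> prod_open oX oY U)
  (HUc : forall p, exists U, UU U /\ U p) (K : set X) (y : Y) :
  compact_subset oX K ->
  exists U V l, oX U /\ oY V /\ V y /\ (forall x, K x -> U x) /\
    (forall W, In W l -> UU W) /\
    (forall a b, U a -> V b -> exists W, In W l /\ W (a, b)).
Proof.
  intros HK.
  set (C := fun U : set X => oX U /\ exists V W, oY V /\ V y /\ UU W /\
       forall a b, U a -> V b -> W (a, b)).
  destruct (HK C) as [lc [Hlc Hcov]].
  - intros U [HU _]; exact HU.
  - intros x Kx. destruct (HUc (x, y)) as [W [HW Wp]].
    destruct (HUo W HW (x, y) Wp) as [U [V [HU [HV [Ux [Vy Hr]]]]]].
    exists U; split; [|exact Ux]. split; [exact HU|]. exists V, W; auto.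
  - destruct (finite_rect X Y oY tY UU y lc) as [V [l [HV [Vy [Hl Hc]]]]].
    { intros U HU. destruct (Hlc U HU) as [_ H]. exact H. }
    exists (fun x => exists U, In U lc /\ U x), V, l.
    destruct tX as [_ [tU _]].
    refine (conj _ (conj HV (conj Vy (conj _ (conj Hl _))))).
    + apply (tU (fun U => In U lc)). intros U HU. apply (Hlc U HU).
    + intros x Kx. destruct (Hcov x Kx) as [U [HU Ux]]. exists U; auto.
    + intros a b [U [HU Ua]] Vb. exact (Hc U HU a b Ua Vb).
Qed.

Theorem lemma5p9 (X Y : Type) (oX : set X -> Prop) (oY : set Y -> Prop)
  (tX : is_topology oX) (tY : is_topology oY)
  (t1X : T1_space oX) (t1Y : T1_space oY)
  (infX : infinite_type X) (infY : infinite_type Y) :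
  weakly_Alster oX -> weakly_Lindelof oY -> weakly_Lindelof (prod_open oX oY).
Proof.
  intros HA HL UU HUo HUc.
  assert (x0 : X).
  { apply (fun H => proj1_sig (constructive_indefinite_description (fun _ : X => True) H)).
    apply NNPP; intros N. apply infX. exists []. intros x. apply N. exists x; exact I. }
  assert (y0 : Y).
  { apply (fun H => proj1_sig (constructive_indefinite_description (fun _ : Y => True) H)).
    apply NNPP; intros N. apply infY. exists []. intros x. apply N. exists x; exact I. }
  assert (HW0 : exists W0, UU W0).
  { destruct (HUc (x0, y0)) as [W [HW _]]; eauto. }
  destruct HW0 as [W0 HW0].
  assert (Hkey : forall K y, exists t : set X * set Y * list (set (X * Y)),
    compact_subset oX K ->
    let '(U, V, l) := t in
    oX U /\ oY V /\ V y /\ (forall x, K x -> U x) /\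
    (forall W, In W l -> UU W) /\
    (forall a b, U a -> V b -> exists W, In W l /\ W (a, b))).
  { intros K y. destruct (classic (compact_subset oX K)) as [HK|HK].
    - destruct (keyA X Y oX oY tX tY UU HUo HUc K y HK) as [U [V [l H]]].
      exists (U, V, l). intros _. exact H.
    - exists (fun _ => True, fun _ => True, []). intros H; contradiction. }
  set (T := fun K y => proj1_sig (constructive_indefinite_description _ (Hkey K y))).
  assert (HT : forall K y, compact_subset oX K -> let '(U, V, l) := T K y in
    oX U /\ oY V /\ V y /\ (forall x, K x -> U x) /\
    (forall W, In W l -> UU W) /\
    (forall a b, U a -> V b -> exists W, In W l /\ W (a, b))).
  { intros K y. unfold T. destruct (constructive_indefinite_description _ (Hkey K y)) as [t Ht].
    exact Ht. }
  set (Uf := fun K y => fst (fst (T K y))).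
  set (Vf := fun K y => snd (fst (T K y))).
  set (Lf := fun K y => snd (T K y)).
  assert (HT' : forall K y, compact_subset oX K ->
    oX (Uf K y) /\ oY (Vf K y) /\ Vf K y y /\ (forall x, K x -> Uf K y x) /\
    (forall W, In W (Lf K y) -> UU W) /\
    (forall a b, Uf K y a -> Vf K y b -> exists W, In W (Lf K y) /\ W (a, b))).
  { intros K y HK. specialize (HT K y HK). unfold Uf, Vf, Lf.
    destruct (T K y) as [[U V] l]. exact HT. }
  clearbody Uf Vf Lf. clear HT T Hkey.
  assert (Hys : forall K, exists ys : nat -> Y, compact_subset oX K ->
     dense oY (fun y => exists n, Vf K (ys n) y)).
  { intros K. destruct (classic (compact_subset oX K)) as [HK|HK].
    - destruct (HL (fun V => exists y, V = Vf K y)) as [g [Hg Hd]].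
      + intros V [y ->]. apply (HT' K y HK).
      + intros y. exists (Vf K y). split; [exists y; reflexivity|]. apply (HT' K y HK).
      + exists (fun n => proj1_sig (constructive_indefinite_description _ (Hg n))).
        intros _. intros O HO HOn. destruct (Hd O HO HOn) as [z [Oz [n Hz]]].
        exists z; split; [exact Oz|]. exists n.
        destruct (constructive_indefinite_description _ (Hg n)) as [y Hy]; simpl.
        rewrite <- Hy; exact Hz.
    - exists (fun _ => y0). intros; contradiction. }
  set (ys := fun K => proj1_sig (constructive_indefinite_description _ (Hys K))).
  assert (Hys' : forall K, compact_subset oX K ->
     dense oY (fun y => exists n, Vf K (ys K n) y)).
  { intros K. unfold ys. destruct (constructive_indefinite_description _ (Hys K)); auto. }
  clearbody ys. clear Hys.
  set (G := fun K x => forall n, Uf K (ys K n) x).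
  assert (Final : forall Ks : nat -> set X, (forall m, compact_subset oX (Ks m)) ->
     dense oX (fun x => exists m, G (Ks m) x) ->
     has_countable_dense_subfamily (prod_open oX oY) UU).
  { intros Ks HKs Hd.
    exists (fun n => let (a, k) := of_nat n in let (m, j) := of_nat a in
                     nth k (Lf (Ks m) (ys (Ks m) j)) W0).
    split.
    - intros n. destruct (of_nat n) as [a k]. destruct (of_nat a) as [m j].
      destruct (Compare_dec.lt_dec k (length (Lf (Ks m) (ys (Ks m) j)))) as [Hk|Hk].
      + apply (HT' (Ks m) (ys (Ks m) j) (HKs m)). apply nth_In; exact Hk.
      + rewrite nth_overflow; [exact HW0|]. apply PeanoNat.Nat.nlt_ge; exact Hk.
    - intros O HO [p Op].
      destruct (HO p Op) as [A [B [HA' [HB [Ap [Bp HAB]]]]]].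
      destruct (Hd A HA' (ex_intro _ _ Ap)) as [x [Ax [m Gx]]].
      destruct (Hys' (Ks m) (HKs m) B HB (ex_intro _ _ Bp)) as [y [By [j Vy]]].
      destruct (HT' (Ks m) (ys (Ks m) j) (HKs m)) as [_ [_ [_ [_ [_ Hc]]]]].
      destruct (Hc x y (Gx j) Vy) as [W [HWl Wxy]].
      destruct (In_nth _ _ W0 HWl) as [k [_ Hk]].
      exists (x, y). split; [apply HAB; assumption|].
      exists (to_nat (to_nat (m, j), k)).
      rewrite !cancel_of_to. rewrite Hk. exact Wxy. }
  destruct (classic (exists K, compact_subset oX K /\ forall x, G K x)) as [[K [HK Hall]]|Hno].
  - apply (Final (fun _ => K)); [intros; exact HK|].
    intros O _ [x Ox]. exists x; split; [exact Ox|]. exists 0. apply Hall.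
  - destruct (HA (fun S => exists K, compact_subset oX K /\ S = G K)) as [h [Hh Hd]].
    + split; [|split].
      * intros S [K [HK ->]]. exists (fun n => Uf K (ys K n)). split.
        -- intros n. apply (HT' K _ HK).
        -- intros x. unfold G. tauto.
      * intros S [K [HK ->]] Hall. apply Hno. exists K; auto.
      * intros K HK. exists (G K). split; [exists K; auto|].
        intros x Kx n. apply (HT' K _ HK). exact Kx.
    + set (Ks := fun m => proj1_sig (constructive_indefinite_description _ (Hh m))).
      apply (Final Ks).
      * intros m. unfold Ks. destruct (constructive_indefinite_description _ (Hh m)) as [K [HK HKe]]; simpl; exact HK.
      * intros O HO HOn. destruct (Hd O HO HOn) as [x [Ox [m Hx]]].
        exists x; split; [exact Ox|]. exists m. unfold Ks.
        destruct (constructive_indefinite_description _ (Hh m)) as [K [HK0 HKe]]; simpl.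
        rewrite <- HKe. exact Hx.
Qed.
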